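(* Let $0<\lambda<1$, identify $\mathbb R^2$ with $\mathbb C$, let $f_j(z)=1+\theta_jz$ with $\theta_j=\lambda e^{(-1)^j i\pi/3}$ for $j=1,2$, let $A$ be the unique nonempty compact set with $A=f_1(A)\cup f_2(A)$, and let $Y=\{(x,y)\colon x=0\}$. Then for $j=1,2$, \[\mathrm{dist}(Y,f_j(A))=\mathrm{dist}(Y,A)\ge 1+\frac\lambda2-\frac{\lambda^2(1+2\lambda)}{2(1-\lambda^2)},\] and \[\mathrm{dist}(f_1(A),f_2(A))\ge\sqrt3\,\lambda-\sqrt3\,\frac{\lambda^3}{1-\lambda}.\]
   Context: For sets $S_1,S_2\subset\mathbb R^2$, $\mathrm{dist}(S_1,S_2)=\inf\{|x-y|\colon x\in S_1,y\in S_2\}$. *)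

(* Defs.v *)
From HB Require Import structures.
From mathcomp Require Import all_boot all_order all_algebra.
From mathcomp Require Import all_classical all_reals all_analysis.
Set Implicit Arguments. Unset Strict Implicit. Unset Printing Implicit Defensive.
Import Order.TTheory GRing.Theory Num.Theory numFieldNormedType.Exports.
Local Open Scope classical_set_scope.
Local Open Scope ring_scope.

Definition edist (R : realType) (p q : R * R) : R :=
  Num.sqrt ((p.1 - q.1) ^+ 2 + (p.2 - q.2) ^+ 2).

Definition setdist (R : realType) (S1 S2 : set (R * R)) : R :=
  inf [set d | exists x, exists y, [/\ S1 x, S2 y & d = edist x y]].

Definition theta (R : realType) (lam : R) (j : nat) : R * R :=
  (lam * cos ((-1) ^+ j * pi / 3), lam * sin ((-1) ^+ j * pi / 3)).

(* f_j(z) = 1 + theta_j z, complex multiplication written in coordinates *)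
Definition ifsmap (R : realType) (lam : R) (j : nat) (z : R * R) : R * R :=
  let t := theta lam j in
  (1 + (t.1 * z.1 - t.2 * z.2), t.1 * z.2 + t.2 * z.1).

Definition Yline (R : realType) : set (R * R) := [set p | p.1 = 0].

(* Main.v *)
Require Import Defs.
From HB Require Import structures.
From mathcomp Require Import all_boot all_order all_algebra.
From mathcomp Require Import all_classical all_reals all_analysis.
From mathcomp Require Import ring lra.
Import Order.TTheory GRing.Theory Num.Theory numFieldNormedType.Exports.
Local Open Scope classical_set_scope.
Local Open Scope ring_scope.

Section S.
Variable R : realType.
Lemma cos_pi3 : cos (pi / 3 : R) = 1 / 2.
Proof.
have hp : (0 : R) < pi := pi_gt0 R.
have hc : 0 < cos (pi / 3 : R).
  apply: cos_gt0_pihalf; apply/andP; split; lra.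
have e : cos ((pi / 3) *+ 2 : R) = - cos (pi / 3).
  have -> : (pi / 3) *+ 2 = pi - pi / 3 :> R by rewrite mulr2n; field.
  by rewrite cosB cospi sinpi; ring.
rewrite cos_mulr2n in e.
nra.
Qed.

Lemma sin_pi3 : sin (pi / 3 : R) = Num.sqrt 3 / 2.
Proof.
have hp : (0 : R) < pi := pi_gt0 R.
have hs : 0 < sin (pi / 3 : R).
  apply: sin_gt0_pi; apply/andP; split; lra.
have h2 := sin2cos2 (pi / 3 : R); rewrite cos_pi3 in h2.
have t3 : Num.sqrt 3 ^+ 2 = 3 :> R by rewrite sqr_sqrtr // ler0n.
have t0 : 0 <= Num.sqrt 3 :> R by apply: sqrtr_ge0.
nra.
Qed.
Definition sq (p q : R * R) := (p.1 - q.1) ^+ 2 + (p.2 - q.2) ^+ 2.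

Lemma sq_ge0 p q : 0 <= sq p q.
Proof. rewrite /sq; apply: addr_ge0; apply: sqr_ge0. Qed.

Lemma sq_contr lam j p q : sq (ifsmap lam j p) (ifsmap lam j q) = lam ^+ 2 * sq p q.
Proof.
rewrite /sq /ifsmap /theta /=.
set c := cos _; set s := sin _.
have h : c ^+ 2 + s ^+ 2 = 1 by apply: cos2Dsin2.
transitivity ((c ^+ 2 + s ^+ 2) * lam ^+ 2 * ((p.1 - q.1) ^+ 2 + (p.2 - q.2) ^+ 2)); first by ring.
by rewrite h mul1r.
Qed.

Lemma approx lam (A K : set (R * R)) (k0 : R * R) M :
  0 < lam -> lam < 1 ->
  (forall a, A a -> exists j a', (j = 1 \/ j = 2)%N /\ A a' /\ a = ifsmap lam j a') ->
  (forall j k, (j = 1 \/ j = 2)%N -> K k -> K (ifsmap lam j k)) ->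
  K k0 -> (forall a, A a -> sq a k0 <= M) ->
  forall a, A a -> forall e, 0 < e -> exists k, K k /\ sq a k < e.
Proof.
move=> l0 l1 hA hK Kk0 hM.
have ind : forall n a, A a -> exists k, K k /\ sq a k <= (lam ^+ 2) ^+ n * M.
  elim=> [|n IH] a Aa.
    by exists k0; split => //; rewrite expr0 mul1r; apply: hM.
  have [j [a' [hj [Aa' ->]]]] := hA a Aa.
  have [k' [Kk' hk']] := IH a' Aa'.
  exists (ifsmap lam j k'); split; first exact: hK.
  rewrite sq_contr.
  have -> : (lam ^+ 2) ^+ n.+1 * M = lam ^+ 2 * ((lam ^+ 2) ^+ n * M) by rewrite exprS mulrA.
  by apply: ler_wpM2l => //; apply: sqr_ge0.
move=> a Aa e e0.
have M0 : 0 <= M by apply: le_trans (hM a Aa); apply: sq_ge0.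
have l2 : `|lam ^+ 2| < 1.
  rewrite ger0_norm; last by apply: sqr_ge0.
  by rewrite expr2; nra.
have eM : 0 < e / (M + 1) by apply: divr_gt0 => //; lra.
have := cvg_expr l2; move=> /cvgr0_norm_lt /(_ _ eM) [N _ HN].
have := HN N (leqnn N) => /= hN.
have [k [Kk hk]] := ind N a Aa.
exists k; split => //.
apply: le_lt_trans hk _.
rewrite ger0_norm in hN; last by apply: exprn_ge0; apply: sqr_ge0.
rewrite ltr_pdivlMr in hN; last by lra.
have hp : 0 <= (lam ^+ 2) ^+ N by apply: exprn_ge0; apply: sqr_ge0.
nra.
Qed.

Lemma closed_approx (K : set (R * R)) a :
  closed K -> (forall e, 0 < e -> exists k, K k /\ sq a k < e) -> K a.
Proof.
move=> /closure_id Kc H; rewrite Kc => B /nbhs_ballP [e e0 sub].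
have [k [Kk hk]] := H (e ^+ 2) (exprn_gt0 2 e0).
exists k; split => //; apply: (sub k).
move: hk; rewrite /sq => hk.
have h1 := sqr_ge0 (a.1 - k.1); have h2 := sqr_ge0 (a.2 - k.2).
move: e0 => /= e0.
split => /=; rewrite -ball_normE /ball_ /= ltr_norml; apply/andP; split; nra.
Qed.
Definition Ce (lam : R) := - (1 + 2 * lam) / (2 * (1 - lam ^+ 2)).
Definition Co (lam : R) := - (2 + lam) / (2 * (1 - lam ^+ 2)).
Definition b1 (lam : R) := 1 / 2 + lam * Ce lam.
Definition b0 (lam : R) := 1 + lam * b1 lam.
Definition HH (lam : R) := 3 / (2 * (1 - lam)).

Definition conds (lam : R) : seq (R * R * R) :=
  [:: (b0 lam, 1, 0); (b1 lam, 1/2, -1/2); (b1 lam, 1/2, 1/2);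
      (Ce lam, -1/2, -1/2); (Ce lam, -1/2, 1/2); (Co lam, -1, 0);
      (- (lam * HH lam), 0, 1); (- (lam * HH lam), 0, -1);
      (- HH lam, 3/2, 1/2); (- HH lam, -3/2, -1/2);
      (- HH lam, 3/2, -1/2); (- HH lam, -3/2, 1/2);
      (3/2 - lam * (lam * HH lam), 3/2, 1/2);
      (3/2 - lam * (lam * HH lam), 3/2, -1/2);
      (- (lam * HH lam), 3/2, -1/2); (- (lam * HH lam), 3/2, 1/2)].

Definition Kp lam (x w : R) := all (fun c : R * R * R => c.1.1 <= c.1.2 * x + c.2 * w) (conds lam).

Lemma consts lam : 0 < lam -> lam < 1 ->
  [/\ Ce lam = -1/2 + lam * Co lam, Co lam = -1 + lam * Ce lam,
      HH lam = 3/2 + lam * HH lam, 0 < HH lam &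
      [/\ (1 - lam ^+ 2) * Ce lam = - (1 + 2 * lam) / 2,
          (1 - lam ^+ 2) * Co lam = - (2 + lam) / 2 &
          (1 - lam) * HH lam = 3 / 2]].
Proof.
move=> l0 l1.
have d1 : 1 - lam != 0 by rewrite subr_eq0 eq_sym; apply/negP => /eqP e; lra.
have d2 : 1 - lam ^+ 2 != 0.
  rewrite subr_eq0 eq_sym; apply/negP => /eqP e; nra.
have d3 : 1 + lam != 0 by apply/negP => /eqP e; lra.
rewrite /Ce /Co /HH; split.
- by field; rewrite ?d2 //.
- by field; rewrite ?d2.
- by field.
- by apply: divr_gt0; lra.
- split; by field.
Qed.

Lemma Kp_inv lam x w x' w' (sgn : R) : 0 < lam -> lam < 1 -> (sgn = 1 \/ sgn = -1) ->
  Kp lam x w -> x' = 1 + lam * x / 2 + sgn * (lam * w / 2) ->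
  w' = lam * w / 2 - sgn * (3 * lam * x / 2) -> Kp lam x' w'.
Proof.
move=> l0 l1 hs H -> ->.
have [e1 e2 e3 h0 [e4 e5 e6]] := consts lam l0 l1.
move: H; rewrite /Kp /= => H.
move: H => /andP [h1 /andP [h2 /andP [h3 /andP [h4 /andP [h5 /andP [h6 /andP [h7 /andP [h8 /andP [h9 /andP [h10 /andP [h11 /andP [h12 /andP [h13 /andP [h14 /andP [h15 /andP [h16 _]]]]]]]]]]]]]]]].
have m x1 x2 : x1 <= x2 -> lam * x1 <= lam * x2 by move=> hx; apply: ler_wpM2l => //; apply: ltW.
have q1 : lam * (lam * HH lam) <= lam * HH lam by nra.
have q2 : lam * HH lam <= HH lam by nra.
have q3 : 0 <= lam * HH lam by nra.
have q4 : Ce lam <= b0 lam.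
  rewrite /b0 /b1; lra.
have m1 := m _ _ h1.
have m2 := m _ _ h2.
have m3 := m _ _ h3.
have m4 := m _ _ h4.
have m5 := m _ _ h5.
have m6 := m _ _ h6.
have m7 := m _ _ h7.
have m8 := m _ _ h8.
have m9 := m _ _ h9.
have m10 := m _ _ h10.
have m11 := m _ _ h11.
have m12 := m _ _ h12.
have m13 := m _ _ h13.
have m14 := m _ _ h14.
have m15 := m _ _ h15.
have m16 := m _ _ h16.
have q5 : Co lam <= b1 lam by rewrite /b1; lra.
have m0 := m _ _ q4.
have m17 := m _ _ q5.
have e7 : b1 lam = 1/2 + lam * Ce lam by [].
have e8 : b0 lam = 1 + lam * b1 lam by [].
clear h1 h2 h3 h4 h5 h6 h7 h8 h9 h10 h11 h12 h13 h14 h15 h16 e4 e5 e6 q4 q5 m.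
case: hs => ->; rewrite /=; repeat (apply/andP; split); rewrite ?mul1r ?mulN1r; lra.
Qed.
Local Notation t := (Num.sqrt (3 : R)).

Lemma tt3 : t * t = 3.
Proof. by rewrite -expr2 sqr_sqrtr // ler0n. Qed.

Lemma ifsmap1E lam (p : R * R) : ifsmap lam 1 p =
  (1 + lam * p.1 / 2 + lam * (t * p.2) / 2, lam * p.2 / 2 - lam * t * p.1 / 2).
Proof.
rewrite /ifsmap /theta /= expr1 mulN1r mulNr cosN sinN cos_pi3 sin_pi3.
congr (_, _); ring.
Qed.

Lemma ifsmap2E lam (p : R * R) : ifsmap lam 2 p =
  (1 + lam * p.1 / 2 - lam * (t * p.2) / 2, lam * p.2 / 2 + lam * t * p.1 / 2).
Proof.
rewrite /ifsmap /theta /= expr2 mulN1r opprK mul1r cos_pi3 sin_pi3.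
congr (_, _); ring.
Qed.

Definition Kset (lam : R) : set (R * R) := [set p | Kp lam p.1 (t * p.2)].

Lemma Kset_inv (lam : R) j k : 0 < lam -> lam < 1 -> (j = 1 \/ j = 2)%N ->
  Kset lam k -> Kset lam (ifsmap lam j k).
Proof.
move=> l0 l1 [->|->] Kk; rewrite ?ifsmap1E ?ifsmap2E /Kset /=.
  apply: (@Kp_inv lam _ _ _ _ 1 l0 l1 _ Kk); [by left| by ring |].
  transitivity (lam * (t * k.2) / 2 - 1 * ((t * t) * lam * k.1 / 2)); first ring.
  by rewrite tt3.
- apply: (@Kp_inv lam _ _ _ _ (-1) l0 l1 _ Kk); [by right| by ring |].
  transitivity (lam * (t * k.2) / 2 - (-1) * ((t * t) * lam * k.1 / 2)); first ring.
  by rewrite tt3.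
Qed.

Lemma lim_le (a : R * R) (Q : set (R * R)) b al ga :
  (forall e, 0 < e -> exists k, Q k /\ sq a k < e) ->
  (forall k, Q k -> b <= al * k.1 + ga * k.2) -> b <= al * a.1 + ga * a.2.
Proof.
move=> H hQ; apply/ler_addgt0Pr => eps eps0.
have C0 : 0 < `|al| + `|ga| + 1 by have := normr_ge0 al; have := normr_ge0 ga; lra.
set C := `|al| + `|ga| + 1 in C0.
set d := eps / C.
have d0 : 0 < d by apply: divr_gt0.
have [k [Qk hk]] := H (d ^+ 2) (exprn_gt0 2 d0).
move: hk; rewrite /sq => hk.
have h1 := sqr_ge0 (a.1 - k.1); have h2 := sqr_ge0 (a.2 - k.2).
have n1 : `|k.1 - a.1| < d by rewrite ltr_norml; apply/andP; split; nra.
have n2 : `|k.2 - a.2| < d by rewrite ltr_norml; apply/andP; split; nra.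
have t1 : al * (k.1 - a.1) <= `|al| * d.
  apply: le_trans (ler_norm _) _; rewrite normrM; apply: ler_wpM2l; [exact: normr_ge0|exact: ltW].
have t2 : ga * (k.2 - a.2) <= `|ga| * d.
  apply: le_trans (ler_norm _) _; rewrite normrM; apply: ler_wpM2l; [exact: normr_ge0|exact: ltW].
have Cd : C * d = eps by rewrite /d; field; apply: lt0r_neq0.
have := hQ k Qk.
have : (`|al| + `|ga|) * d <= C * d by apply: ler_wpM2r; [exact: ltW| rewrite /C; lra].
rewrite Cd => hh hb.
nra.
Qed.

Lemma Kset_closed (lam : R) a :
  (forall e, 0 < e -> exists k, Kset lam k /\ sq a k < e) -> Kset lam a.
Proof.
move=> H; rewrite /Kset /= /Kp; apply/allP => c hc.
rewrite mulrA; apply: (@lim_le a (Kset lam) c.1.1 c.1.2 (c.2 * t) H) => k; rewrite /Kset /= /Kp => /allP /(_ c hc).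
by rewrite mulrA.
Qed.

Lemma Kset_k0 (lam : R) : 0 < lam -> lam < 1 -> Kset lam (1 + lam / 2, 0).
Proof.
move=> l0 l1; rewrite /Kset /= mulr0.
have [e1 e2 e3 h0 [e4 e5 e6]] := consts lam l0 l1.
have Cen : Ce lam < 0 by rewrite /Ce mulNr oppr_lt0; apply: divr_gt0; nra.
have Con : Co lam < 0 by rewrite /Co mulNr oppr_lt0; apply: divr_gt0; nra.
have p1 : lam ^+ 2 * Ce lam <= 0 by nra.
have p2 : lam * Ce lam <= 0 by nra.
have p3 : lam ^+ 2 * Co lam <= 0 by nra.
have q3 : 0 <= lam * HH lam by nra.
have hH : 3 / 2 <= HH lam by lra.
have p4 : 3 / 2 * lam <= lam * HH lam by nra.
have p5 : 0 <= lam * (lam * HH lam) by nra.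
have e7 : b1 lam = 1/2 + lam * Ce lam by [].
have e8 : b0 lam = 1 + lam * b1 lam by [].
have p6 : lam * (lam * Ce lam) <= 0 by nra.
have e9 : lam * b1 lam = lam / 2 + lam * (lam * Ce lam) by rewrite e7; ring.
rewrite /Kp /=; repeat (apply/andP; split); lra.
Qed.

Lemma bound_sq (A : set (R * R)) k0 : compact A ->
  exists M, forall a, A a -> sq a k0 <= M.
Proof.
move=> /compact_bounded [M0 [_ HM]].
have hM0 : M0 < `|M0| + 1 by have := ler_norm M0; lra.
have Hm := HM (`|M0| + 1) hM0.
have sqb (x y m : R) : `|x| <= m -> (x - y) ^+ 2 <= (m + `|y|) ^+ 2.
  move=> hx; move: hx; rewrite ler_norml => /andP [hx1 hx2].
  have := ler_norm y; have := ler_norm (- y); rewrite normrN => hy1 hy2.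
  nra.
exists ((`|M0| + 1 + `|k0.1|) ^+ 2 + (`|M0| + 1 + `|k0.2|) ^+ 2) => a Aa.
have := Hm a Aa; rewrite /= prod_normE ge_max => /andP [h1 h2].
rewrite /sq; apply: lerD; exact: sqb.
Qed.


Definition cj (p : R * R) : R * R := (p.1, - p.2).

Lemma ifsmap1_cj lam p : ifsmap lam 1 (cj p) = cj (ifsmap lam 2 p).
Proof. rewrite ifsmap1E ifsmap2E /cj /=; congr (_, _); ring. Qed.

Lemma ifsmap2_cj lam p : ifsmap lam 2 (cj p) = cj (ifsmap lam 1 p).
Proof. rewrite ifsmap1E ifsmap2E /cj /=; congr (_, _); ring. Qed.

Lemma cjK p : cj (cj p) = p.
Proof. by rewrite /cj /= opprK; case: p. Qed.

Lemma sq_cj p q : sq (cj p) q = sq p (cj q).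
Proof. rewrite /sq /cj /=; ring. Qed.

Lemma edist_cj (p q : R * R) : Defs.edist (cj p) (cj q) = Defs.edist p q.
Proof. rewrite /Defs.edist /cj /=; congr Num.sqrt; ring. Qed.

Lemma edist_ge1 (p q : R * R) : `|p.1 - q.1| <= Defs.edist p q.
Proof.
rewrite /Defs.edist -sqrtr_sqr; apply: ler_wsqrtr.
by rewrite lerDl; apply: sqr_ge0.
Qed.

Lemma edist_ge2 (p q : R * R) : `|p.2 - q.2| <= Defs.edist p q.
Proof.
rewrite /Defs.edist -sqrtr_sqr; apply: ler_wsqrtr.
by rewrite lerDr; apply: sqr_ge0.
Qed.

Lemma Kset_get lam p : Kset lam p ->
  [/\ b0 lam <= p.1,
      3/2 - lam * (lam * HH lam) <= 3/2 * p.1 + 1/2 * (t * p.2) &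
      3/2 - lam * (lam * HH lam) <= 3/2 * p.1 + -1/2 * (t * p.2)].
Proof.
rewrite /Kset /= /Kp /=.
move=> /andP [c1 /andP [_ /andP [_ /andP [_ /andP [_ /andP [_ /andP [_ /andP [_
  /andP [_ /andP [_ /andP [_ /andP [_ /andP [c13 /andP [c14 _]]]]]]]]]]]]]].
by split => //; lra.
Qed.

Theorem main_thm (lam : R) (A : set (R * R)) :
  0 < lam -> lam < 1 ->
  A !=set0 -> compact A ->
  A = ifsmap lam 1 @` A `|` ifsmap lam 2 @` A ->
  (forall j : nat, (j = 1 \/ j = 2)%N ->
     setdist (@Yline R) (ifsmap lam j @` A) = setdist (@Yline R) A /\
     1 + lam / 2 - lam ^+ 2 * (1 + 2 * lam) / (2 * (1 - lam ^+ 2))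
       <= setdist (@Yline R) A) /\
  Num.sqrt 3 * lam - Num.sqrt 3 * (lam ^+ 3 / (1 - lam))
    <= setdist (ifsmap lam 1 @` A) (ifsmap lam 2 @` A).
Proof.
move=> l0 l1 [a0 Aa0] cA eA.
have clA : closed A := compact_closed (@norm_hausdorff _ _) cA.
have hA : forall a, A a -> exists j a', (j = 1 \/ j = 2)%N /\ A a' /\ a = ifsmap lam j a'.
  move=> a; rewrite {1}eA => -[] [a' Aa' <-]; [exists 1%N | exists 2%N]; exists a'; split => //; by [left|right].
have hAinv : forall j k, (j = 1 \/ j = 2)%N -> A k -> A (ifsmap lam j k).
  move=> j k [->|->] Ak; rewrite eA; [left|right]; by exists k.
have Acj : forall a, A a -> A (cj a).
  have [M HM] := @bound_sq A (cj a0) cA.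
  have := @approx lam (cj @` A) A a0 M l0 l1.
  move=> /(_ _ hAinv Aa0) H a Aa.
  apply: closed_approx clA _.
  apply: H; last by exists a.
  - move=> c [a' Aa' <-].
    have [j [a'' [hj [Aa'' ->]]]] := hA a' Aa'.
    case: hj => ->.
    + exists 2%N, (cj a''); split; first by right.
      by split; [exists a''|rewrite ifsmap2_cj].
    + exists 1%N, (cj a''); split; first by left.
      by split; [exists a''|rewrite ifsmap1_cj].
  - by move=> c [a' Aa' <-]; rewrite sq_cj; apply: HM.
have AK : forall a, A a -> Kset lam a.
  have [M HM] := @bound_sq A (1 + lam / 2, 0) cA.
  move=> a Aa; apply: Kset_closed.
  apply: (@approx lam A (Kset lam) (1 + lam / 2, 0) M l0 l1 hA _ (@Kset_k0 lam l0 l1) HM a Aa).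
  by move=> j k hj Kk; apply: Kset_inv.
split.
- move=> j hj; split.
  + rewrite /setdist; congr inf; apply/seteqP; split => d /= [x [y [Yx By ->]]].
    * exists x, y; split => //; case: By => y' Ay' <-; exact: hAinv.
    * have [j' [y' [hj' [Ay' ey]]]] := hA y By.
      have [e|ne] := eqVneq j j'.
        by exists x, y; split => //; rewrite ey e; exists y'.
      exists (cj x), (cj y); split; last by rewrite edist_cj.
      - by rewrite /Yline /cj /=; exact: Yx.
      - exists (cj y'); first exact: Acj.
        rewrite ey; case: hj => hj; case: hj' => hj'; subst j j' => //.
        + by rewrite ifsmap1_cj.
        + by rewrite ifsmap2_cj.
  + have -> : 1 + lam / 2 - lam ^+ 2 * (1 + 2 * lam) / (2 * (1 - lam ^+ 2)) = b0 lam.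
      rewrite /b0 /b1 /Ce; rewrite !mulNr; ring.
    apply: lb_le_inf.
      by exists (Defs.edist (0, 0) a0), (0, 0), a0.
    move=> d /= [x [y [Yx Ay ->]]].
    have [c1 _ _] := @Kset_get lam y (AK y Ay).
    apply: le_trans (edist_ge1 x y).
    rewrite /Yline /= in Yx; rewrite Yx sub0r normrN.
    by apply: le_trans (ler_norm _).
- apply: lb_le_inf.
    exists (Defs.edist (ifsmap lam 1 a0) (ifsmap lam 2 a0)), (ifsmap lam 1 a0), (ifsmap lam 2 a0).
    by split => //; exists a0.
  move=> d /= [x [y [[a Aa <-] [b Ab <-] ->]]].
  apply: le_trans (edist_ge2 _ _).
  have hn : forall z : R, - z <= `|z| by move=> z; rewrite -normrN; apply: ler_norm.
  apply: le_trans (hn _); rewrite opprB.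
  have [_ _ ca] := @Kset_get lam a (AK a Aa).
  have [_ cb _] := @Kset_get lam b (AK b Ab).
  rewrite ifsmap1E ifsmap2E /=.
  have [e1 e2 e3 h0 [e4 e5 e6]] := consts lam l0 l1.
  have t0 : 0 < t by rewrite sqrtr_gt0 ltr0n.
  have ma := ler_wpM2l (ltW l0) ca.
  have mb := ler_wpM2l (ltW l0) cb.
  have d1 : 1 - lam != 0 by rewrite subr_eq0 eq_sym; apply/negP => /eqP e; lra.
  have e10 : lam ^+ 3 / (1 - lam) = 2 / 3 * (lam * (lam * (lam * HH lam))).
    by rewrite /HH; field.
  rewrite e10 -(ler_pM2l t0).
  have tt := tt3.
  have -> : t * (t * lam - t * (2 / 3 * (lam * (lam * (lam * HH lam))))) =
     (t * t) * lam - (t * t) * (2 / 3 * (lam * (lam * (lam * HH lam))))by ring.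
  have -> : t * (lam * b.2 / 2 + lam * t * b.1 / 2 - (lam * a.2 / 2 - lam * t * a.1 / 2)) =
     lam * (t * b.2) / 2 + (t * t) * lam * b.1 / 2 - lam * (t * a.2) / 2 + (t * t) * lam * a.1 / 2 by ring.
  rewrite tt.
  lra.
Qed.
End S.

Theorem lemma3p4 (R : realType) (lam : R) (A : set (R * R)) :
  0 < lam -> lam < 1 ->
  A !=set0 -> compact A ->
  A = ifsmap lam 1 @` A `|` ifsmap lam 2 @` A ->
  (forall j : nat, (j = 1 \/ j = 2)%N ->
     setdist (@Yline R) (ifsmap lam j @` A) = setdist (@Yline R) A /\
     1 + lam / 2 - lam ^+ 2 * (1 + 2 * lam) / (2 * (1 - lam ^+ 2))
       <= setdist (@Yline R) A) /\
  Num.sqrt 3 * lam - Num.sqrt 3 * (lam ^+ 3 / (1 - lam))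
    <= setdist (ifsmap lam 1 @` A) (ifsmap lam 2 @` A).
Proof. exact: main_thm. Qed.
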